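(* Suppose the family of update functions $\mathrm{Upd}$ satisfies P1, P2, P3 and P5. Let $\mathcal{M}=(W,\mathcal{F})$ be a measure space, $\Pr\in\Delta_{\mathcal{M}}$ and $B\in\mathcal{F}$ with $\Pr(B)>0$ and $\mathrm{Upd}^{\mathcal{M}}(\Pr,B)=\emptyset$. Then for every measure space $\mathcal{M}'=(W',\mathcal{F}')$, every $\Pr'\in\Delta_{\mathcal{M}'}$ and every $B'\in\mathcal{F}'$ with $\Pr'(B')<1$, we have $\mathrm{Upd}^{\mathcal{M}'}(\Pr',B')=\emptyset$.
   Context: A measure space is a pair $\mathcal{M}=(W,\mathcal{F})$ with $\mathcal{F}$ an algebra of subsets of $W$; $\Delta_{\mathcal{M}}$ is the set of all probability measures on $\mathcal{M}$. An update function on $\mathcal{M}$ is a map $\mathrm{Upd}^{\mathcal{M}}:2^{\Delta_{\mathcal{M}}}\times\mathcal{F}\to 2^{\Delta_{\mathcal{M}}}$ such that $\mathrm{Upd}^{\mathcal{M}}(X,B)=\emptyset$ whenever $\Pr(B)=0$ for all $\Pr\in X$; $\mathrm{Upd}^{\mathcal{M}}(\Pr,B)$ means $\mathrm{Upd}^{\mathcal{M}}(\{\Pr\},B)$. A family $\mathrm{Upd}=\{\mathrm{Upd}^{\mathcal{M}}\}$ has one update function for each measure space. A representation shift from $\mathcal{M}=(W,\mathcal{F})$ to $\mathcal{M}'=(W',\mathcal{F}')$ is a surjection $f:W\to W'$ with $f^{-1}(B)\in\mathcal{F}$ for all $B\in\mathcal{F}'$; $(f^*(\Pr))(A)=\Pr(f^{-1}(A))$,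 $f^*(X)=\{f^*(\Pr):\Pr\in X\}$. Postulates (for all $\mathcal{M}=(W,\mathcal{F})$, $X\subseteq\Delta_{\mathcal{M}}$, $B,C\in\mathcal{F}$ unless stated otherwise): P1: $\mathrm{Upd}^{\mathcal{M}}(X,B)\subseteq\{\Pr\in\Delta_{\mathcal{M}}:\Pr(B)=1\}$. P2: for every representation shift $f$ from $\mathcal{M}$ to $\mathcal{M}'=(W',\mathcal{F}')$, $X\subseteq\Delta_{\mathcal{M}}$, $B\in\mathcal{F}'$: $\mathrm{Upd}^{\mathcal{M}'}(f^*(X),B)=f^*(\mathrm{Upd}^{\mathcal{M}}(X,f^{-1}(B)))$. P3: $\mathrm{Upd}^{\mathcal{M}}(\mathrm{Upd}^{\mathcal{M}}(X,B),C)=\mathrm{Upd}^{\mathcal{M}}(X,B\cap C)$. P5: $\mathrm{Upd}^{\mathcal{M}}(X,B)=\bigcup_{\Pr\in X}\mathrm{Upd}^{\mathcal{M}}(\Pr,B)$. *)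

(* Defs.v *)
From Stdlib Require Import Reals ProofIrrelevance FunctionalExtensionality PropExtensionality.
Open Scope R_scope.

Definition is_algebra {W : Type} (F : (W -> Prop) -> Prop) : Prop :=
  F (fun _ => True) /\
  (forall A, F A -> F (fun w => ~ A w)) /\
  (forall A B, F A -> F B -> F (fun w => A w \/ B w)).

Record mspace := MSpace {
  mcar : Type;
  mF : (mcar -> Prop) -> Prop;
  mF_alg : is_algebra mF }.

Definition event (M : mspace) := { A : mcar M -> Prop | mF M A }.

Definition ev_full (M : mspace) : event M :=
  exist _ (fun _ => True) (proj1 (mF_alg M)).

Definition ev_union (M : mspace) (A B : event M) : event M :=
  exist _ (fun w => proj1_sig A w \/ proj1_sig B w)
    (proj2 (proj2 (mF_alg M)) _ _ (proj2_sig A) (proj2_sig B)).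

Lemma alg_inter (M : mspace) (A B : mcar M -> Prop) :
  mF M A -> mF M B -> mF M (fun w => A w /\ B w).
Proof.
  intros hA hB. destruct (mF_alg M) as [_ [hC hU]].
  assert (E : (fun w => A w /\ B w) = (fun w => ~ (fun w => ~ A w \/ ~ B w) w)).
  { apply functional_extensionality; intro w; apply propositional_extensionality.
    simpl. split.
    - intros [a b] [na|nb]; auto.
    - intro h. split.
      + destruct (Classical_Prop.classic (A w)) as [a|na]; [exact a|exfalso; apply h; auto].
      + destruct (Classical_Prop.classic (B w)) as [b|nb]; [exact b|exfalso; apply h; auto]. }
  rewrite E. apply hC. apply hU; apply hC; assumption.
Qed.

Definition ev_inter (M : mspace) (A B : event M) : event M :=
  exist _ (fun w => proj1_sig A w /\ proj1_sig B w)
    (alg_inter M _ _ (proj2_sig A) (proj2_sig B)).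

Definition ev_disjoint (M : mspace) (A B : event M) : Prop :=
  forall w, proj1_sig A w -> proj1_sig B w -> False.

Definition is_prob (M : mspace) (p : event M -> R) : Prop :=
  (forall A, 0 <= p A) /\
  p (ev_full M) = 1 /\
  (forall A B, ev_disjoint M A B -> p (ev_union M A B) = p A + p B).

Definition ProbSet (M : mspace) := { p : event M -> R | is_prob M p }.

Definition pr {M : mspace} (P : ProbSet M) (A : event M) : R := proj1_sig P A.

Definition single {T : Type} (x : T) : T -> Prop := fun y => y = x.
Definition seteq {T : Type} (X Y : T -> Prop) : Prop := forall x, X x <-> Y x.

Definition UpdFamily := forall M : mspace, (ProbSet M -> Prop) -> event M -> (ProbSet M -> Prop).

Definition is_update_function (M : mspace)
    (U : (ProbSet M -> Prop) -> event M -> (ProbSet M -> Prop)) : Prop :=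
  forall X B, (forall P, X P -> pr P B = 0) -> forall Q, ~ U X B Q.

Definition is_update_family (Upd : UpdFamily) : Prop :=
  forall M, is_update_function M (Upd M).

Definition surjective_map {A B : Type} (f : A -> B) : Prop := forall b, exists a, f a = b.

Definition measurable_map (M M' : mspace) (f : mcar M -> mcar M') : Prop :=
  forall B : event M', mF M (fun w => proj1_sig B (f w)).

Definition ev_pre {M M' : mspace} {f : mcar M -> mcar M'}
  (hf : measurable_map M M' f) (B : event M') : event M :=
  exist _ (fun w => proj1_sig B (f w)) (hf B).

Lemma ev_eq (M : mspace) (A B : event M) : proj1_sig A = proj1_sig B -> A = B.
Proof.
  destruct A as [a ha], B as [b hb]; simpl; intro e; subst b.
  f_equal; apply proof_irrelevance.
Qed.

Lemma push_is_prob (M M' : mspace) (f : mcar M -> mcar M') (hf : measurable_map M M' f)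
  (P : ProbSet M) : is_prob M' (fun B => pr P (ev_pre hf B)).
Proof.
  destruct P as [p [h0 [h1 hadd]]]; unfold pr; simpl.
  split; [|split].
  - intro A; apply h0.
  - rewrite <- h1; f_equal; apply ev_eq; reflexivity.
  - intros A B hd.
    rewrite <- hadd.
    + f_equal; apply ev_eq; reflexivity.
    + intros w ha hb; exact (hd (f w) ha hb).
Qed.

Definition push {M M' : mspace} {f : mcar M -> mcar M'} (hf : measurable_map M M' f)
  (P : ProbSet M) : ProbSet M' :=
  exist _ (fun B => pr P (ev_pre hf B)) (push_is_prob M M' f hf P).

Definition push_set {M M' : mspace} {f : mcar M -> mcar M'} (hf : measurable_map M M' f)
  (X : ProbSet M -> Prop) : ProbSet M' -> Prop :=
  fun Q => exists P, X P /\ push hf P = Q.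

Definition P1 (Upd : UpdFamily) : Prop :=
  forall M X B Q, Upd M X B Q -> pr Q B = 1.

Definition P2 (Upd : UpdFamily) : Prop :=
  forall (M M' : mspace) (f : mcar M -> mcar M'),
    surjective_map f -> forall (hf : measurable_map M M' f) X (B : event M'),
    seteq (Upd M' (push_set hf X) B) (push_set hf (Upd M X (ev_pre hf B))).

Definition P3 (Upd : UpdFamily) : Prop :=
  forall M X B C, seteq (Upd M (Upd M X B) C) (Upd M X (ev_inter M B C)).

Definition P5 (Upd : UpdFamily) : Prop :=
  forall M X B, seteq (Upd M X B) (fun Q => exists P, X P /\ Upd M (single P) B Q).

(* Main.v *)
Require Import Defs.
From Stdlib Require Import Reals.
From Stdlib Require Import Arith Classical ClassicalEpsilon FunctionalExtensionality PropExtensionality ProofIrrelevance Lia Lra.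
Open Scope R_scope.

Notation emi := excluded_middle_informative.

Lemma pred_ext {T : Type} (A B : T -> Prop) : (forall w, A w <-> B w) -> A = B.
Proof. intro h; apply functional_extensionality; intro w; apply propositional_extensionality; auto. Qed.

Lemma pr_eq {M} (P : ProbSet M) (A B : event M) :
  (forall w, proj1_sig A w <-> proj1_sig B w) -> pr P A = pr P B.
Proof. intro h; f_equal; apply ev_eq; apply pred_ext; auto. Qed.

Lemma pr_ge0 {M} (P : ProbSet M) A : 0 <= pr P A.
Proof. destruct P as [p hp]; unfold pr; simpl; apply (proj1 hp). Qed.

Lemma pr_full {M} (P : ProbSet M) : pr P (ev_full M) = 1.
Proof. destruct P as [p hp]; unfold pr; simpl; apply (proj1 (proj2 hp)). Qed.

Lemma pr_split {M} (P : ProbSet M) (A X Y : event M) :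
  (forall w, proj1_sig A w <-> proj1_sig X w \/ proj1_sig Y w) ->
  (forall w, proj1_sig X w -> proj1_sig Y w -> False) ->
  pr P A = pr P X + pr P Y.
Proof.
  intros hA hd. rewrite (pr_eq P A (ev_union M X Y)) by (simpl; auto).
  destruct P as [p hp]; unfold pr; simpl. apply (proj2 (proj2 hp)). exact hd.
Qed.

Lemma pr_empty {M} (P : ProbSet M) (A : event M) :
  (forall w, ~ proj1_sig A w) -> pr P A = 0.
Proof.
  intro h. assert (e := pr_split P A A A (fun w => conj (fun x => or_introl x) (fun x => match x with or_introl y => y | or_intror y => y end)) (fun w a _ => h w a)).
  lra.
Qed.

Lemma pr_le1 {M} (P : ProbSet M) (A : event M) : pr P A <= 1.
Proof.
  set (C := exist _ (fun w => ~ proj1_sig A w) (proj1 (proj2 (mF_alg M)) _ (proj2_sig A)) : event M).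
  assert (e := pr_split P (ev_full M) A C).
  rewrite pr_full in e. assert (0 <= pr P C) by apply pr_ge0.
  assert (1 = pr P A + pr P C); [|lra].
  apply e; simpl.
  - intro w; split; [intros _; apply classic|auto].
  - intros w a b; auto.
Qed.


Lemma TR1 (Upd : UpdFamily) (h2 : P2 Upd) (h5 : P5 Upd) (M M' : mspace)
  (f : mcar M -> mcar M') (hs : surjective_map f) (hf : measurable_map M M' f)
  (P : ProbSet M) (E : event M') Q :
  Upd M (single P) (ev_pre hf E) Q -> exists Q', Upd M' (single (push hf P)) E Q'.
Proof.
  intro hQ. exists (push hf Q).
  assert (H : Upd M' (push_set hf (single P)) E (push hf Q)).
  { apply (h2 M M' f hs hf (single P) E). exists Q; auto. }
  apply (h5 M' _ E) in H. destruct H as [P0 [[P1' [e1 e2]] H]].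
  unfold single in e1; subst. exact H.
Qed.

Lemma TR2 (Upd : UpdFamily) (h2 : P2 Upd) (h5 : P5 Upd) (M M' : mspace)
  (f : mcar M -> mcar M') (hs : surjective_map f) (hf : measurable_map M M' f)
  (P : ProbSet M) (E : event M') Q' :
  Upd M' (single (push hf P)) E Q' -> exists Q, Upd M (single P) (ev_pre hf E) Q.
Proof.
  intro hQ.
  assert (H : Upd M' (push_set hf (single P)) E Q').
  { apply (h5 M' _ E). exists (push hf P). split; auto. exists P; split; reflexivity. }
  apply (h2 M M' f hs hf (single P) E) in H. destruct H as [Q [H _]]. eauto.
Qed.

Lemma UP (Upd : UpdFamily) (h3 : P3 Upd) (h5 : P5 Upd) M P (D C : event M) Q :
  Upd M (single P) (ev_inter M D C) Q -> exists Q', Upd M (single P) D Q'.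
Proof.
  intro h. apply (h3 M (single P) D C) in h. apply (h5 M _ C) in h.
  destruct h as [P0 [h _]]; eauto.
Qed.

Lemma CMP (Upd : UpdFamily) (h3 : P3 Upd) (h5 : P5 Upd) M P (D C : event M) Q Q2 :
  Upd M (single P) D Q -> Upd M (single Q) C Q2 -> Upd M (single P) (ev_inter M D C) Q2.
Proof.
  intros hq hq2. apply (h3 M (single P) D C). apply (h5 M _ C). exists Q; auto.
Qed.

Lemma nonempty_pos (Upd : UpdFamily) (hU : is_update_family Upd) M P (B : event M) Q :
  Upd M (single P) B Q -> pr P B <> 0.
Proof.
  intros hq e. apply (hU M (single P) B) with Q; auto.
  intros P0 h; unfold single in h; subst; auto.
Qed.

Lemma nonempty_point (Upd : UpdFamily) (hU : is_update_family Upd) M P (B : event M) Q :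
  Upd M (single P) B Q -> exists w, proj1_sig B w.
Proof.
  intro hq. apply NNPP; intro hn. apply (nonempty_pos Upd hU M P B Q hq).
  apply pr_empty. intros w hw; apply hn; eauto.
Qed.

Definition alg_all (T:Type) : is_algebra (fun _ : T -> Prop => True) :=
  conj I (conj (fun _ _ => I) (fun _ _ _ _ => I)).
Definition fullsp (T:Type) : mspace := MSpace T (fun _ => True) (alg_all T).
Definition evf {T : Type} (A : T -> Prop) : event (fullsp T) := exist _ A I.

Lemma prob_ext {M} (R1 R2 : ProbSet M) : (forall A, pr R1 A = pr R2 A) -> R1 = R2.
Proof.
  destruct R1 as [f1 h1], R2 as [f2 h2]; unfold pr; simpl; intro h.
  assert (f1 = f2) by (apply functional_extensionality; auto). subst.
  f_equal; apply proof_irrelevance.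
Qed.

Definition Tb := fullsp bool.
Definition evT : event Tb := evf (fun b => b = true).

Lemma bool_val (R : ProbSet Tb) (A : event Tb) :
  pr R A = (if emi (proj1_sig A true) then pr R evT else 0) +
           (if emi (proj1_sig A false) then 1 - pr R evT else 0).
Proof.
  assert (hF : pr R (evf (fun b => b = false)) = 1 - pr R evT).
  { assert (e := pr_split R (ev_full Tb) evT (evf (fun b => b = false))).
    rewrite pr_full in e. assert (1 = pr R evT + pr R (evf (fun b => b = false))); [|lra].
    apply e; simpl. intros [|]; intuition. intros w -> ; discriminate. }
  rewrite (pr_split R A (evf (fun b => proj1_sig A b /\ b = true)) (evf (fun b => proj1_sig A b /\ b = false))).
  2:{ simpl; intros [|]; intuition; discriminate. }
  2:{ simpl; intros w [_ ->] [_ ?]; discriminate. }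
  f_equal.
  - destruct (emi _) as [a|na].
    + apply pr_eq; simpl; intros [|]; intuition; discriminate.
    + apply pr_empty; simpl; intros [|] [x y]; auto; discriminate.
  - destruct (emi _) as [a|na].
    + rewrite <- hF. apply pr_eq; simpl; intros [|]; intuition; discriminate.
    + apply pr_empty; simpl; intros [|] [x y]; auto; discriminate.
Qed.

Lemma uniq_bool (R1 R2 : ProbSet Tb) : pr R1 evT = pr R2 evT -> R1 = R2.
Proof. intro e; apply prob_ext; intro A; rewrite (bool_val R1 A), (bool_val R2 A), e; reflexivity. Qed.

Definition fB {M : mspace} (B : event M) : mcar M -> mcar Tb :=
  fun w => if emi (proj1_sig B w) then true else false.

Lemma fB_meas {M : mspace} (B : event M) : measurable_map M Tb (fB B).
Proof.
  intro E. destruct (mF_alg M) as [hT [hC hU]].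
  destruct (classic (proj1_sig E true)) as [et|et]; destruct (classic (proj1_sig E false)) as [ef|ef].
  - assert (e : (fun w => proj1_sig E (fB B w)) = (fun _ : mcar M => True)).
    { apply pred_ext; intro w; unfold fB; destruct (emi _); split; auto. }
    rewrite e; exact hT.
  - assert (e : (fun w => proj1_sig E (fB B w)) = proj1_sig B).
    { apply pred_ext; intro w; unfold fB; destruct (emi _); split; intro; auto; contradiction. }
    rewrite e; apply proj2_sig.
  - assert (e : (fun w => proj1_sig E (fB B w)) = (fun w => ~ proj1_sig B w)).
    { apply pred_ext; intro w; unfold fB; destruct (emi _); split; intro; auto; contradiction. }
    rewrite e; apply hC, proj2_sig.
  - assert (e : (fun w => proj1_sig E (fB B w)) = (fun w : mcar M => ~ True)).
    { apply pred_ext; intro w; unfold fB; destruct (emi _); split; intro; try contradiction; auto. }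
    rewrite e; apply hC, hT.
Qed.

Lemma fB_surj {M : mspace} (B : event M) :
  (exists w, proj1_sig B w) -> (exists w, ~ proj1_sig B w) -> surjective_map (fB B).
Proof.
  intros [w1 h1] [w2 h2] [|].
  - exists w1; unfold fB; destruct (emi _); tauto.
  - exists w2; unfold fB; destruct (emi _); tauto.
Qed.

Lemma fB_pre {M : mspace} (B : event M) : ev_pre (fB_meas B) evT = B.
Proof.
  apply ev_eq; apply pred_ext; intro w; simpl; unfold fB; destruct (emi _); intuition; discriminate.
Qed.

Definition A_T (Upd : UpdFamily) (a : R) : Prop :=
  exists R0 : ProbSet Tb, pr R0 evT = a /\ exists Q, Upd Tb (single R0) evT Q.

Lemma T1f (Upd : UpdFamily) (h2 : P2 Upd) (h5 : P5 Upd) M P (B : event M) Q :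
  (exists w, proj1_sig B w) -> (exists w, ~ proj1_sig B w) ->
  Upd M (single P) B Q -> A_T Upd (pr P B).
Proof.
  intros e1 e2 hQ. rewrite <- (fB_pre B) in hQ.
  destruct (TR1 Upd h2 h5 M Tb (fB B) (fB_surj B e1 e2) (fB_meas B) P evT Q hQ) as [Q' hQ'].
  exists (push (fB_meas B) P). split; [|eauto].
  unfold pr at 1; simpl. rewrite fB_pre. reflexivity.
Qed.

Lemma T1b (Upd : UpdFamily) (h2 : P2 Upd) (h5 : P5 Upd) M P (B : event M) :
  (exists w, proj1_sig B w) -> (exists w, ~ proj1_sig B w) ->
  A_T Upd (pr P B) -> exists Q, Upd M (single P) B Q.
Proof.
  intros e1 e2 [R0 [hR [Q' hQ']]].
  assert (push (fB_meas B) P = R0).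
  { apply uniq_bool. rewrite hR. unfold pr at 1; simpl. rewrite fB_pre. reflexivity. }
  subst R0.
  destruct (TR2 Upd h2 h5 M Tb (fB B) (fB_surj B e1 e2) (fB_meas B) P evT Q' hQ') as [Q hQ].
  rewrite fB_pre in hQ. eauto.
Qed.

Definition Ou := fullsp unit.

Lemma uniq_unit (R1 R2 : ProbSet Ou) : R1 = R2.
Proof.
  apply prob_ext; intro A. destruct (classic (proj1_sig A tt)) as [h|h].
  - rewrite (pr_eq R1 A (ev_full Ou)), (pr_eq R2 A (ev_full Ou)), !pr_full; auto;
      intros []; simpl; split; auto.
  - rewrite !pr_empty; auto; intros [] h'; contradiction.
Qed.

Definition fU {M : mspace} : mcar M -> mcar Ou := fun _ => tt.

Lemma fU_meas (M : mspace) : measurable_map M Ou fU.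
Proof.
  intro E. destruct (mF_alg M) as [hT [hC hU]].
  destruct (classic (proj1_sig E tt)) as [h|h].
  - assert (e : (fun w => proj1_sig E (@fU M w)) = (fun _ : mcar M => True)).
    { apply pred_ext; intro w; unfold fU; split; auto. }
    rewrite e; exact hT.
  - assert (e : (fun w => proj1_sig E (@fU M w)) = (fun w : mcar M => ~ True)).
    { apply pred_ext; intro w; unfold fU; split; intro; try contradiction; auto. }
    rewrite e; apply hC, hT.
Qed.

Lemma fU_surj (M : mspace) (w : mcar M) : surjective_map (@fU M).
Proof. intros []; exists w; reflexivity. Qed.

Lemma fU_pre (M : mspace) : ev_pre (fU_meas M) (ev_full Ou) = ev_full M.
Proof. apply ev_eq; reflexivity. Qed.

Definition A_O (Upd : UpdFamily) : Prop :=
  exists R0 Q, Upd Ou (single R0) (ev_full Ou) Q.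

Lemma Of (Upd : UpdFamily) (h2 : P2 Upd) (h5 : P5 Upd) M P (w : mcar M) Q :
  Upd M (single P) (ev_full M) Q -> A_O Upd.
Proof.
  intro hQ. rewrite <- fU_pre in hQ.
  destruct (TR1 Upd h2 h5 M Ou fU (fU_surj M w) (fU_meas M) P (ev_full Ou) Q hQ) as [Q' hQ'].
  exists (push (fU_meas M) P), Q'; exact hQ'.
Qed.

Lemma Ob (Upd : UpdFamily) (h2 : P2 Upd) (h5 : P5 Upd) M P (w : mcar M) :
  A_O Upd -> exists Q, Upd M (single P) (ev_full M) Q.
Proof.
  intros [R0 [Q' hQ']].
  rewrite (uniq_unit R0 (push (fU_meas M) P)) in hQ'.
  destruct (TR2 Upd h2 h5 M Ou fU (fU_surj M w) (fU_meas M) P (ev_full Ou) Q' hQ') as [Q hQ].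
  rewrite fU_pre in hQ; eauto.
Qed.

Fixpoint fsum (n : nat) (f : nat -> R) : R :=
  match n with O => 0 | S m => fsum m f + f m end.

Lemma fsum_ext n f g : (forall i, (i < n)%nat -> f i = g i) -> fsum n f = fsum n g.
Proof. induction n; intro h; simpl; auto. rewrite IHn, h; auto. Qed.

Lemma fsum_plus n f g : fsum n (fun i => f i + g i) = fsum n f + fsum n g.
Proof. induction n; simpl; [lra|]. rewrite IHn; lra. Qed.

Lemma fsum_nonneg n f : (forall i, 0 <= f i) -> 0 <= fsum n f.
Proof. induction n; intro h; simpl; [lra|]. specialize (IHn h); specialize (h n); lra. Qed.

Lemma fsum_const n c : fsum n (fun _ => c) = INR n * c.
Proof. induction n; simpl fsum; [simpl; lra|]. rewrite IHn, S_INR; lra. Qed.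

Lemma fsum_single n j f : (j < n)%nat -> fsum n (fun i => if emi (i = j) then f i else 0) = f j.
Proof.
  induction n; intro hj; [lia|]. simpl.
  destruct (Nat.eq_dec j n) as [e|ne].
  - subst. rewrite (fsum_ext n _ (fun _ => 0)).
    + rewrite fsum_const. destruct (emi _); [lra|tauto].
    + intros i hi; destruct (emi _); [lia|reflexivity].
  - rewrite IHn by lia. destruct (emi _); [lia|lra].
Qed.

Lemma fsum_gt m f c : (0 < m)%nat -> (forall j, (j < m)%nat -> c < f j) -> INR m * c < fsum m f.
Proof.
  induction m; intros hm h; [lia|].
  destruct m.
  - simpl. specialize (h 0%nat ltac:(lia)). lra.
  - change (fsum (S (S m)) f) with (fsum (S m) f + f (S m)).
    rewrite S_INR. assert (IH := IHm ltac:(lia) (fun j hj => h j ltac:(lia))).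
    specialize (h (S m) ltac:(lia)). lra.
Qed.

Definition Sn := fullsp nat.

Definition wmeas (w : nat -> R) (N : nat) (A : event Sn) : R :=
  fsum N (fun i => if emi (proj1_sig A i) then w i else 0).

Lemma wmeas_prob w N : (forall i, 0 <= w i) -> fsum N w = 1 -> is_prob Sn (wmeas w N).
Proof.
  intros hw hs. split; [|split].
  - intro A; apply fsum_nonneg; intro i; destruct (emi _); auto; lra.
  - unfold wmeas. rewrite <- hs. apply fsum_ext; intros i _. simpl.
    destruct (emi _); [reflexivity|tauto].
  - intros A B hd. unfold wmeas. rewrite <- fsum_plus. apply fsum_ext; intros i _. simpl.
    repeat match goal with |- context [emi ?P] => destruct (emi P) end;
    try lra; exfalso; unfold ev_disjoint in hd; first [eapply hd; eassumption | tauto].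
Qed.

Definition mkW w N hw hs : ProbSet Sn := exist _ (wmeas w N) (wmeas_prob w N hw hs).

Lemma sum_sing (Q : ProbSet Sn) m :
  pr Q (evf (fun i => (i < m)%nat)) = fsum m (fun j => pr Q (evf (fun i => i = j))).
Proof.
  induction m; simpl fsum.
  - apply pr_empty; simpl; intros; lia.
  - rewrite (pr_split Q _ (evf (fun i => (i < m)%nat)) (evf (fun i => i = m))).
    + rewrite IHm; reflexivity.
    + simpl; intro w; split; intro; lia.
    + simpl; intros; lia.
Qed.

Ltac emis := repeat match goal with |- context [emi ?P] => destruct (emi P) end.

Definition w3 (a c : R) (i : nat) : R :=
  match i with 0 => a | 1 => c - a | 2 => 1 - c | _ => 0 end.

Lemma UPC (Upd : UpdFamily) (h2 : P2 Upd) (h3 : P3 Upd) (h5 : P5 Upd) a c :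
  A_T Upd a -> 0 <= a -> a <= c -> c <= 1 -> A_T Upd c.
Proof.
  intros hA ha hac hc.
  assert (hw : forall i, 0 <= w3 a c i) by (intros [|[|[|i]]]; simpl; lra).
  assert (hs : fsum 3 (w3 a c) = 1) by (simpl; lra).
  set (nu := mkW (w3 a c) 3 hw hs).
  set (D0 := evf (fun i : nat => i = 0%nat)).
  set (D01 := evf (fun i : nat => i = 0%nat \/ i = 1%nat)).
  assert (e0 : pr nu D0 = a).
  { unfold pr, nu, mkW, wmeas; simpl. emis; try (exfalso; lia); lra. }
  assert (e01 : pr nu D01 = c).
  { unfold pr, nu, mkW, wmeas; simpl. emis; try (exfalso; lia); lra. }
  destruct (T1b Upd h2 h5 Sn nu D0) as [Q hQ].
  { exists 0%nat; simpl; reflexivity. }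
  { exists 1%nat; simpl; lia. }
  { rewrite e0; exact hA. }
  assert (eI : D0 = ev_inter Sn D01 D0).
  { apply ev_eq; apply pred_ext; simpl; intro i; split; [intro; split; auto; lia | tauto]. }
  rewrite eI in hQ. destruct (UP Upd h3 h5 Sn nu D01 D0 Q hQ) as [Q' hQ'].
  rewrite <- e01. apply (T1f Upd h2 h5 Sn nu D01 Q').
  { exists 0%nat; simpl; auto. }
  { exists 2%nat; simpl; lia. }
  exact hQ'.
Qed.

Definition wk (s : R) (k : nat) (i : nat) : R :=
  if lt_dec i k then s / INR k else if Nat.eq_dec i k then 1 - s else 0.

Lemma STEP (Upd : UpdFamily) (hU : is_update_family Upd) (h1 : P1 Upd) (h2 : P2 Upd)
  (h3 : P3 Upd) (h5 : P5 Upd) p k s :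
  A_T Upd p -> 0 <= p -> (2 <= k)%nat -> p <= 1 - 1 / INR k ->
  A_T Upd s -> 0 <= s <= 1 -> A_T Upd (s * (1 - 1 / INR k)).
Proof.
  intros hp hp0 hk hpk hs0 hs.
  assert (hK : 0 < INR k) by (apply lt_0_INR; lia).
  assert (hw : forall i, 0 <= wk s k i).
  { intro i; unfold wk; destruct (lt_dec i k).
    - unfold Rdiv; apply Rmult_le_pos; [lra|left; apply Rinv_0_lt_compat; lra].
    - destruct (Nat.eq_dec i k); lra. }
  assert (hsum : fsum (S k) (wk s k) = 1).
  { change (fsum (S k) (wk s k)) with (fsum k (wk s k) + wk s k k).
    rewrite (fsum_ext k (wk s k) (fun _ => s / INR k)).
    - rewrite fsum_const. unfold wk; destruct (lt_dec k k); [lia|].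
      destruct (Nat.eq_dec k k); [|lia]. field; lra.
    - intros i hi; unfold wk; destruct (lt_dec i k); [reflexivity|lia]. }
  set (nu := mkW (wk s k) (S k) hw hsum).
  set (D := evf (fun i : nat => (i < k)%nat)).
  assert (eD : pr nu D = s).
  { unfold pr, nu, D, mkW, wmeas; unfold evf; cbn [proj1_sig].
    change (fsum (S k) ?f) with (fsum k f + f k).
    rewrite (fsum_ext k _ (fun _ => s / INR k)).
    - rewrite fsum_const. emis; [lia|]. field; lra.
    - intros i hi; emis; [|lia]. unfold wk; destruct (lt_dec i k); [reflexivity|lia]. }
  assert (hsing : forall j, (j < k)%nat -> pr nu (evf (fun i => i = j)) = s / INR k).
  { intros j hj. unfold pr, nu, mkW, wmeas; unfold evf; cbn [proj1_sig].
    rewrite fsum_single by lia. unfold wk; destruct (lt_dec j k); [reflexivity|lia]. }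
  destruct (T1b Upd h2 h5 Sn nu D) as [Q hQ].
  { exists 0%nat; simpl; lia. }
  { exists k; simpl; lia. }
  { rewrite eD; exact hs0. }
  assert (hQD : pr Q D = 1) by exact (h1 _ _ _ _ hQ).
  assert (hj : exists j, (j < k)%nat /\ pr Q (evf (fun i => i = j)) <= 1 / INR k).
  { apply NNPP; intro hn.
    assert (hlt := fsum_gt k (fun j => pr Q (evf (fun i => i = j))) (1 / INR k) ltac:(lia)).
    rewrite <- sum_sing in hlt. fold D in hlt. rewrite hQD in hlt.
    assert (INR k * (1 / INR k) = 1) by (field; lra).
    assert (INR k * (1 / INR k) < 1); [|lra].
    apply hlt. intros j hjk. apply Rnot_le_lt. intro hle. apply hn; eauto. }
  destruct hj as [j [hjk hjQ]].
  set (C := evf (fun i : nat => (i < k)%nat /\ i <> j)).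
  assert (eC : pr Q D = pr Q C + pr Q (evf (fun i => i = j))).
  { apply pr_split; simpl.
    - intro i; split.
      + intro hi; destruct (Nat.eq_dec i j); [right|left]; auto.
      + intros [[? ?]| ->]; auto.
    - intros i [_ ne] e; contradiction. }
  assert (hQC : A_T Upd (pr Q C)).
  { apply (UPC Upd h2 h3 h5 p); auto; [|apply pr_le1].
    lra. }
  assert (wC : exists i, proj1_sig C i).
  { destruct (Nat.eq_dec j 0); [exists 1%nat | exists 0%nat]; simpl; lia. }
  destruct (T1b Upd h2 h5 Sn Q C wC) as [Q2 hQ2].
  { exists k; simpl; lia. }
  { exact hQC. }
  assert (hI := CMP Upd h3 h5 Sn nu D C Q Q2 hQ hQ2).
  assert (hA := T1f Upd h2 h5 Sn nu (ev_inter Sn D C) Q2).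
  assert (eI : pr nu D = pr nu (ev_inter Sn D C) + pr nu (evf (fun i => i = j))).
  { apply pr_split; simpl.
    - intro i; split.
      + intro hi; destruct (Nat.eq_dec i j); [right|left]; auto.
      + intros [[? [? ?]]| ->]; auto.
    - intros i [_ [_ ne]] e; contradiction. }
  rewrite eD, hsing in eI by exact hjk.
  replace (s * (1 - 1 / INR k)) with (pr nu (ev_inter Sn D C)) by (assert (s * (1 - 1 / INR k) = s - s / INR k) by (field; lra); lra).
  apply hA; auto.
  - destruct wC as [i hi]; exists i; simpl in *; tauto.
  - exists k; simpl; lia.
Qed.

Theorem lemmaA3 (Upd : UpdFamily) (hUpd : is_update_family Upd)
  (h1 : P1 Upd) (h2 : P2 Upd) (h3 : P3 Upd) (h5 : P5 Upd)
  (Ms : mspace) (P : ProbSet Ms) (B : event Ms)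
  (hB : 0 < pr P B) (hE : forall Q, ~ Upd Ms (single P) B Q) :
  forall (M' : mspace) (P' : ProbSet M') (B' : event M'),
    pr P' B' < 1 -> forall Q, ~ Upd M' (single P') B' Q.
Proof.
  intros M' P' B' hp Q hQ.
  assert (wB : exists w, proj1_sig B w).
  { apply NNPP; intro hn. rewrite pr_empty in hB; [lra|]. intros w hw; apply hn; eauto. }
  destruct (nonempty_point Upd hUpd M' P' B' Q hQ) as [w' hw'].
  destruct (classic (exists w, ~ proj1_sig B w)) as [wn|hall].
  - assert (hq0 : ~ A_T Upd (pr P B)).
    { intro h. destruct (T1b Upd h2 h5 Ms P B wB wn h) as [Q0 hQ0]. eapply hE; eauto. }
    assert (wn' : exists w, ~ proj1_sig B' w).
    { apply NNPP; intro hn.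
      assert (pr P' B' = 1); [|lra].
      rewrite (pr_eq P' B' (ev_full M')); [apply pr_full|].
      intro w; simpl; split; auto; intros _. apply NNPP; intro; apply hn; eauto. }
    assert (hpA : A_T Upd (pr P' B')) by (eapply T1f; eauto).
    set (p := pr P' B') in *.
    assert (hp0 : 0 < p).
    { assert (0 <= p) by apply pr_ge0.
      assert (p <> 0) by exact (nonempty_pos Upd hUpd M' P' B' Q hQ). lra. }
    destruct (archimed_cor1 (1 - p) ltac:(lra)) as [N [hN hN0]].
    assert (hN2 : (2 <= N)%nat).
    { destruct (Nat.eq_dec N 1); [subst; simpl in hN; rewrite Rinv_1 in hN; lra|lia]. }
    assert (hNp : 0 < INR N) by (apply lt_0_INR; lia).
    set (r := 1 - 1 / INR N).
    assert (hpr : p <= r) by (unfold r, Rdiv; rewrite Rmult_1_l; lra).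
    assert (hr1 : r < 1).
    { unfold r. assert (0 < 1 / INR N) by (unfold Rdiv; rewrite Rmult_1_l; apply Rinv_0_lt_compat; lra). lra. }
    assert (iter : forall n, A_T Upd (p * r ^ n) /\ 0 <= p * r ^ n <= 1).
    { induction n.
      - simpl; rewrite Rmult_1_r. split; auto. split; [lra|apply pr_le1].
      - destruct IHn as [hA [hb0 hb1]].
        assert (hs := STEP Upd hUpd h1 h2 h3 h5 p N (p * r ^ n) hpA ltac:(lra) hN2 hpr hA (conj hb0 hb1)).
        fold r in hs. replace (p * r ^ S n) with (p * r ^ n * r) by (simpl; ring).
        split; [exact hs|]. split; nra. }
    destruct (pow_lt_1_zero r ltac:(rewrite Rabs_pos_eq; lra) (pr P B) hB) as [n0 hn0].
    specialize (hn0 n0 (le_n _)). rewrite Rabs_pos_eq in hn0 by (apply pow_le; lra).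
    destruct (iter n0) as [hA [hb0 hb1]].
    apply hq0. apply (UPC Upd h2 h3 h5 (p * r ^ n0)); auto; [|apply pr_le1].
    assert (0 <= r ^ n0) by (apply pow_le; lra).
    assert (p <= 1) by apply pr_le1. nra.
  - assert (eB : B = ev_full Ms).
    { apply ev_eq; apply pred_ext; intro w; simpl; split; auto; intros _.
      apply NNPP; intro hn; apply hall; eauto. }
    destruct wB as [wb _].
    assert (hnO : ~ A_O Upd).
    { intro h. destruct (Ob Upd h2 h5 Ms P wb h) as [Q0 hQ0]. rewrite <- eB in hQ0. eapply hE; eauto. }
    apply hnO.
    assert (eI : B' = ev_inter M' (ev_full M') B').
    { apply ev_eq; apply pred_ext; intro w; simpl; tauto. }
    rewrite eI in hQ. destruct (UP Upd h3 h5 M' P' (ev_full M') B' Q hQ) as [Q1 hQ1].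
    exact (Of Upd h2 h5 M' P' w' Q1 hQ1).
Qed.
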